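(* Let $w$ be a string of length $n$ and $i$ a position of $w$ with $i-\mu(i)\ge1$, $i+\mu(i)-1\le n$ and $\mu(i)>1$. Fix an integer $j$ with $i<j<i+\mu(i)$. Then for every $h$ with $i<h\le j$ and $\mu(h)>1$, we have $\mu(h)\le\max\{\mu(h') : i<h'\le j \text{ and } h'-\mu(h')<i\}$.
   Context: For a position $i\in\{1,\dots,n\}$ of $w$, the local period $\mu(i)$ is the least positive integer $\mu$ such that $w[j]=w[j+\mu]$ for all $j$ with $\max\{1,i-\mu\}\le j$ and $j+\mu\le\min\{n,i+\mu-1\}$. The maximum of the empty set is taken to be $-\infty$ (so the claim in particular asserts the set is nonempty whenever such an $h$ exists). *)

(* Defs.v *)
From mathcomp Require Import all_boot.
Set Implicit Arguments. Unset Strict Implicit. Unset Printing Implicit Defensive.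

(* Strings are sequences over an eqType T; positions are 1-based:
   w[j] is the (j-1)-th element of the seq (onth avoids a default letter). *)
Definition letter (T : eqType) (w : seq T) (j : nat) : option T := onth w j.-1.

(* m satisfies the local-period condition at position i:
   w[j] = w[j+m] for all j with max(1, i-m) <= j and j+m <= min(n, i+m-1).
   (Every such j is <= n, so quantifying over j in [0, n] is exhaustive;
   truncated subtraction i-m agrees with the integer one after maxn 1.) *)
Definition lp_cond (T : eqType) (w : seq T) (i m : nat) : bool :=
  all (fun j => ((maxn 1 (i - m) <= j) && (j + m <= minn (size w) (i + m - 1)))
                ==> (letter w j == letter w (j + m)))
      (iota 0 (size w).+1).

Definition is_lp (T : eqType) (w : seq T) (i : nat) : pred nat :=
  fun m => (0 < m) && lp_cond w i m.

Lemma is_lp_exists (T : eqType) (w : seq T) (i : nat) :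
  exists m, is_lp w i m.
Proof.
exists (size w).+1; apply/andP; split => //.
apply/allP => j _; apply/implyP => /andP [_ H].
have := leq_trans H (geq_minl _ _).
by rewrite addnS ltnNge leq_addl.
Qed.

Definition mu (T : eqType) (w : seq T) (i : nat) : nat :=
  ex_minn (is_lp_exists w i).

(* Main.v *)
Require Import Defs.
From mathcomp Require Import all_boot.
From Stdlib Require Import Lia.
From mathcomp Require Import zify.
Set Implicit Arguments. Unset Strict Implicit. Unset Printing Implicit Defensive.

Fixpoint lexle (lt : rel nat) (a b : seq nat) : bool :=
  match a, b with
  | [::], _ => true
  | _ :: _, [::] => false
  | x :: a', y :: b' => lt x y || ((x == y) && lexle lt a' b')
  end.

Section Lex.
Variable lt : rel nat.
Hypothesis Htri : forall x y, [|| lt x y, x == y | lt y x].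
Hypothesis Hasym : forall x y, lt x y -> lt y x -> False.
Hypothesis Htr : forall x y z, lt x y -> lt y z -> lt x z.

Lemma lt_irr x : lt x x = false.
Proof. by apply/negP => H; apply: (Hasym H H). Qed.

Lemma lexle_total a b : lexle lt a b || lexle lt b a.
Proof.
elim: a b => [|x a IH] [|y b] //=.
case/or3P: (Htri x y) => [->//|/eqP->|->]; last by rewrite orbT.
by rewrite eqxx /= lt_irr /=.
Qed.

Lemma lexle_trans a b c : lexle lt a b -> lexle lt b c -> lexle lt a c.
Proof.
elim: a b c => [|x a IH] [|y b] [|z c] //=.
case/orP=> [Hxy|/andP[/eqP-> Hab]]; case/orP=> [Hyz|/andP[/eqP<- Hbc]].
- by rewrite (Htr Hxy Hyz).
- by rewrite Hxy.
- by rewrite Hyz.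
- by rewrite eqxx (IH _ _ Hab Hbc) orbT.
Qed.

Lemma lexle_anti a b : lexle lt a b -> lexle lt b a -> a = b.
Proof.
elim: a b => [|x a IH] [|y b] //=.
case/orP=> [Hxy|/andP[/eqP-> Hab]]; case/orP=> [Hyx|/andP[/eqP Exy Hba]].
- by case: (Hasym Hxy Hyx).
- by move: Hxy; rewrite Exy lt_irr.
- by rewrite lt_irr in Hyx.
- by rewrite (IH _ Hab Hba).
Qed.

Lemma lexle_catl p a b : lexle lt (p ++ a) (p ++ b) = lexle lt a b.
Proof. by elim: p => //= x p ->; rewrite lt_irr eqxx. Qed.

Lemma lexle_refl a : lexle lt a a.
Proof. by elim: a => //= x a ->; rewrite eqxx orbT. Qed.

Lemma lexle_prefix a b : lexle lt a (a ++ b).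
Proof. by elim: a => //= x a ->; rewrite eqxx orbT. Qed.

End Lex.

Definition ltr : rel nat := fun a b => b < a.

Lemma tri1 x y : [|| x < y, x == y | y < x].
Proof. by case: ltngtP. Qed.
Lemma asym1 x y : x < y -> y < x -> False.
Proof. by move=> H1 H2; have := ltn_trans H1 H2; rewrite ltnn. Qed.
Lemma tr1 x y z : x < y -> y < z -> x < z.
Proof. exact: ltn_trans. Qed.
Lemma tri2 x y : [|| ltr x y, x == y | ltr y x].
Proof. by rewrite /ltr; case: ltngtP. Qed.
Lemma asym2 x y : ltr x y -> ltr y x -> False.
Proof. by rewrite /ltr => H1 H2; have := ltn_trans H1 H2; rewrite ltnn. Qed.
Lemma tr2 x y z : ltr x y -> ltr y z -> ltr x z.
Proof. by rewrite /ltr => H1 H2; exact: ltn_trans H2 H1. Qed.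

Lemma lexle_both a b : lexle ltn a b -> lexle ltr a b -> exists c, b = a ++ c.
Proof.
elim: a b => [|x a IH] b; first by exists b.
case: b => [|y b] //=.
rewrite /ltr; case/orP=> [H1|/andP[/eqP-> H1]]; case/orP=> [H2|/andP[/eqP E H2]].
- by case: (asym1 H1 H2).
- by move: H1; rewrite E ltnn.
- by rewrite ltnn in H2.
- by case: (IH _ H1 H2) => c ->; exists c.
Qed.

Section CFT.
Variable x : seq nat.
Local Notation X k := (nth 0 x k).
Local Notation L := (size x).

Definition per r := forall k, k + r < L -> X k = X (k + r).
Definition rep t r := forall k, t - r <= k < t -> k + r < L -> X k = X (k + r).

Lemma take_drop_eq a b l : a + l <= L -> b + l <= L ->
  (forall k, k < l -> X (a + k) = X (b + k)) ->
  take l (drop a x) = take l (drop b x).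
Proof.
move=> Ha Hb H; apply: (@eq_from_nth _ 0).
  by rewrite !size_takel // size_drop; lia.
move=> k; rewrite size_takel ?size_drop; last lia.
move=> Hkl.
by rewrite !nth_take // !nth_drop H.
Qed.

Lemma split_drop a b : a <= b -> drop a x = take (b - a) (drop a x) ++ drop b x.
Proof. by move=> Hab; rewrite -{1}(cat_take_drop (b - a) (drop a x)) drop_drop subnK. Qed.

Section OneOrder.
Variable lt : rel nat.
Hypothesis Htri : forall x y, [|| lt x y, x == y | lt y x].
Hypothesis Hasym : forall x y, lt x y -> lt y x -> False.
Hypothesis Htr : forall x y z, lt x y -> lt y z -> lt x z.

Definition ismax t := forall k, lexle lt (drop k x) (drop t x).

Lemma max_exists : 0 < L -> exists t, t < L /\ ismax t.
Proof.
move=> HL.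
suff H : forall n, 0 < n <= L -> exists t, t < n /\ forall k, k < n -> lexle lt (drop k x) (drop t x).
  have [t [Ht Hm]] := H L (andb_true_intro (conj HL (leqnn _))).
  exists t; split => // k; case: (ltnP k L) => Hk; first exact: Hm.
  by rewrite drop_oversize.
elim=> [|n IH] // /andP[_ Hn].
case: n IH Hn => [|n] IH Hn.
  by exists 0; split => // k; rewrite ltnS leqn0 => /eqP->; exact: lexle_refl.
have [t [Ht Hm]] := IH (andb_true_intro (conj (ltn0Sn _) (ltnW Hn))).
case/orP: (lexle_total Htri Hasym (drop n.+1 x) (drop t x)) => H.
  exists t; split; first by apply: ltn_trans Ht _.
  move=> k; rewrite ltnS leq_eqVlt => /orP[/eqP->//|]; exact: Hm.
exists n.+1; split => // k; rewrite ltnS leq_eqVlt => /orP[/eqP->|Hk].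
  exact: lexle_refl.
exact: (lexle_trans Htr (Hm _ Hk) H).
Qed.

Lemma B1gen t r : t < L -> 0 < r <= t ->
  (forall k, t - r <= k -> k + r < L -> X k = X (k + r)) -> ismax t -> False.
Proof.
move=> HtL /andP[Hr0 Hrt] Hrep Hmax.
have E1 := @split_drop (t - r) (L - r) ltac:(lia).
have E2 : take (L - r - (t - r)) (drop (t - r) x) = drop t x.
  rewrite (@take_drop_eq (t - r) t); first by rewrite take_oversize // size_drop; lia.
  - lia.
  - lia.
  move=> k Hk; rewrite Hrep; first (congr nth; lia).
  - lia.
  - lia.
rewrite E2 in E1.
have H1 := Hmax (t - r).
rewrite E1 in H1.
have H2 := lexle_prefix lt (drop t x) (drop (L - r) x).
have := lexle_anti Hasym H1 H2 => /(congr1 size); rewrite size_cat !size_drop; lia.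
Qed.

Lemma A1gen t r : t < L -> 0 < r <= t -> t + r <= L -> rep t r -> ismax t -> False.
Proof.
move=> HtL /andP[Hr0 Hrt] HtrL Hrep Hmax.
have E1 := @split_drop (t - r) t ltac:(lia).
have E2 : take (t - (t - r)) (drop (t - r) x) = take r (drop t x).
  rewrite (@take_drop_eq (t - r) t); first by congr take; lia.
  - lia.
  - lia.
  move=> k Hk; rewrite Hrep; first (congr nth; lia).
  - lia.
  - lia.
have E3 := @split_drop t (t + r) ltac:(lia).
rewrite addKn in E3.
have H1 := Hmax (t - r).
rewrite E1 E2 {3}E3 (lexle_catl Hasym) in H1.
have H2 := Hmax (t + r).
have := lexle_anti Hasym H1 H2 => /(congr1 size); rewrite !size_drop; lia.
Qed.

End OneOrder.

Lemma A2gen (lt lt' : rel nat) t t' r :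
  (forall x y, lt' x y -> lt' y x -> False) ->
  (forall a b, lexle lt a b -> lexle lt' a b -> exists c, b = a ++ c) ->
  t' <= t -> t < r -> t + r <= L -> rep t r -> ismax lt t -> ismax lt' t' -> per r.
Proof.
move=> Has' Hboth Ht' Htr HtrL Hrep Hm Hm'.
have E1 := @split_drop t' t Ht'.
have E2 := @split_drop (t' + r) (t + r) ltac:(lia).
have E3 : take (t + r - (t' + r)) (drop (t' + r) x) = take (t - t') (drop t' x).
  rewrite (@take_drop_eq (t' + r) t'); first by congr take; lia.
  - lia.
  - lia.
  move=> k Hk; rewrite (Hrep (t' + k)); first (congr nth; lia).
  - lia.
  - lia.
have H1 := Hm' (t' + r).
rewrite E2 E3 {2}E1 (lexle_catl Has') in H1.
have [c Ec] := Hboth _ _ (Hm (t + r)) H1.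
move=> k Hk; case: (ltnP k t) => Hkt; first by apply: Hrep => //; lia.
have : nth 0 (drop t x) (k - t) = nth 0 (drop (t + r) x) (k - t).
  by rewrite Ec nth_cat size_drop ifT //; lia.
rewrite !nth_drop.
have -> : t + (k - t) = k by lia.
by have -> : t + r + (k - t) = k + r by lia.
Qed.

End CFT.

Section Core.
Variable x : seq nat.
Local Notation X k := (nth 0 x k).
Local Notation L := (size x).

Lemma cft_core (lt lt' : rel nat) q t t' :
  (forall x y, [|| lt x y, x == y | lt y x]) ->
  (forall x y, lt x y -> lt y x -> False) ->
  (forall x y z, lt x y -> lt y z -> lt x z) ->
  (forall x y, lt' x y -> lt' y x -> False) ->
  (forall a b, lexle lt a b -> lexle lt' a b -> exists c, b = a ++ c) ->
  t' <= t -> t < L -> ismax x lt t -> ismax x lt' t' ->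
  (forall r, 0 < r < q -> ~ per x r) ->
  forall r, 0 < r < q -> ~ rep x t r.
Proof.
move=> Htri Has Htr Has' Hboth Ht' HtL Hm Hm' Hnp r Hr Hrep.
have /andP[Hr0 Hrq] := Hr.
have Hr1 : 0 < r <= t \/ t < r by case: (leqP r t) => H; [left; rewrite Hr0 | right].
have Hr2 : t + r <= L \/ L < t + r by case: (leqP (t + r) L) => H; [left | right].
case: Hr1 => Hrt.
  case: Hr2 => HtrL.
    exact: (A1gen Has HtL Hrt HtrL Hrep Hm).
  apply: (B1gen Has HtL Hrt _ Hm).
  by move=> k Hk1 Hk2; apply: Hrep => //; lia.
apply: (Hnp r Hr).
case: Hr2 => HtrL.
  exact: (A2gen Has' Hboth Ht' Hrt HtrL Hrep Hm Hm').
by move=> k Hk; apply: Hrep => //; lia.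
Qed.

Lemma cft q : 1 < q -> 0 < L -> per x q -> (forall r, 0 < r < q -> ~ per x r) ->
  exists t, 0 < t < q /\ forall r, 0 < r < q -> ~ rep x t r.
Proof.
move=> Hq HL Hp Hnp.
have [t1 [Ht1 Hm1]] := max_exists tri1 asym1 tr1 HL.
have [t2 [Ht2 Hm2]] := max_exists tri2 asym2 tr2 HL.
have Hq1 : t1 < q.
  rewrite ltnNge; apply/negP => Hle; apply: (@B1gen x ltn asym1 t1 q Ht1 _ _ Hm1); first by rewrite Hle andbT; lia.
  by move=> k _ Hk; apply: Hp.
have Hq2 : t2 < q.
  rewrite ltnNge; apply/negP => Hle; apply: (@B1gen x ltr asym2 t2 q Ht2 _ _ Hm2); first by rewrite Hle andbT; lia.
  by move=> k _ Hk; apply: Hp.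
have Hpos : 0 < maxn t1 t2.
  case: (posnP t1) => [E1|P1]; last by rewrite leq_max P1.
  case: (posnP t2) => [E2|P2]; last by rewrite leq_max P2 orbT.
  subst; exfalso.
  apply: (Hnp 1); first lia.
  have [c Ec] := lexle_both (Hm1 1) (Hm2 1).
  rewrite drop0 in Ec.
  move=> k Hk; rewrite {1}Ec nth_cat size_drop ifT; last lia.
  by rewrite nth_drop addnC.
case: (leqP t2 t1) => H12.
  exists t1; split; first by move: Hpos; rewrite (maxn_idPl H12); lia.
  exact: (cft_core tri1 asym1 tr1 asym2 (@lexle_both) H12 Ht1 Hm1 Hm2 Hnp).
exists t2; split; first by move: Hpos; rewrite (maxn_idPr (ltnW H12)); lia.
exact: (cft_core tri2 asym2 tr2 asym1 (fun a b H1 H2 => lexle_both H2 H1) (ltnW H12) Ht2 Hm2 Hm1 Hnp).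
Qed.
End Core.

Section Main.
Variable T : eqType.
Variable w : seq T.
Local Notation n := (size w).

Definition code (j : nat) : nat := index (letter w j) (map Some w).

Lemma code_inj a b : 1 <= a <= n -> 1 <= b <= n -> code a = code b -> letter w a = letter w b.
Proof.
move=> Ha Hb E.
have Hin : forall c, 1 <= c <= n -> letter w c \in map Some w.
  by move=> c Hc; rewrite /letter onthE; apply: mem_nth; rewrite size_map; lia.
by rewrite -(nth_index None (Hin _ Ha)) -(nth_index None (Hin _ Hb)) -/(code a) -/(code b) E.
Qed.

Lemma lp_condP i m : lp_cond w i m ->
  forall j, j <= n -> maxn 1 (i - m) <= j -> j + m <= minn n (i + m - 1) ->
  letter w j = letter w (j + m).
Proof.
move=> /allP H j Hj H1 H2; apply/eqP.
have := H j; rewrite mem_iota add0n ltnS Hj => /(_ isT) /implyP; apply.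
by rewrite H1 H2.
Qed.

Lemma lp_condI i m :
  (forall j, j <= n -> maxn 1 (i - m) <= j -> j + m <= minn n (i + m - 1) ->
  letter w j = letter w (j + m)) -> lp_cond w i m.
Proof.
move=> H; apply/allP => j; rewrite mem_iota add0n ltnS => Hj.
by apply/implyP => /andP[H1 H2]; rewrite (H j Hj H1 H2).
Qed.

Lemma mu_spec h : [/\ 0 < mu w h, lp_cond w h (mu w h) &
   (forall r, 0 < r -> lp_cond w h r -> mu w h <= r)].
Proof.
rewrite /mu; case: ex_minnP => m /andP[H1 H2] Hmin; split => // r Hr Hc.
by apply: Hmin; rewrite /is_lp Hr Hc.
Qed.

Lemma keyK h : 1 <= h - mu w h -> h <= n -> 1 < mu w h ->
  exists c, h - mu w h < c < h /\ mu w h <= mu w c.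
Proof.
case: (mu_spec h) => Hq0 Hqc Hqmin.
set q := mu w h => Hg Hhn Hq1.
set g := h - q.
set m := minn n (h + q - 1).
set L := m.+1 - g.
set x := mkseq (fun k => code (g + k)) L.
have Hsx : size x = L by rewrite size_mkseq.
have HX : forall k, k < L -> nth 0 x k = code (g + k) by move=> k Hk; rewrite nth_mkseq.
have Hm1 : m <= n by rewrite /m geq_minl.
have Hm2 : h <= m by rewrite /m leq_min Hhn; lia.
have Hm3 : m <= h + q - 1 by rewrite /m geq_minr.
have Hper : per x q.
  move=> k; rewrite Hsx => Hk; rewrite !HX; try lia.
  rewrite /code (lp_condP Hqc (j := g + k)); first by rewrite addnA.
  - lia.
  - rewrite /g; lia.
  - rewrite -/m; lia.
have Hnp : forall r, 0 < r < q -> ~ per x r.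
  move=> r /andP[Hr0 Hrq] Hp.
  suff : q <= r by lia.
  apply: Hqmin => //; apply: lp_condI => j Hj H1 H2.
  have Hjm : j + r <= m.
    apply: (leq_trans H2); rewrite /m leq_min geq_minl /=.
    apply: leq_trans (geq_minr _ _) _; lia.
  apply: code_inj; try lia.
  have := Hp (j - g); rewrite Hsx !HX; try lia.
  have -> : g + (j - g) = j by lia.
  have -> : g + (j - g + r) = j + r by lia.
  by apply; lia.
have [t [Ht Hrep]] := cft (x := x) Hq1 ltac:(rewrite Hsx; lia) Hper Hnp.
exists (g + t); split; first lia.
rewrite leqNgt; apply/negP => Hlt.
case: (mu_spec (g + t)) => Hr0 Hrc _.
apply: (Hrep (mu w (g + t))); first by rewrite Hr0 Hlt.
move=> k Hk1 Hk2; rewrite Hsx in Hk2; rewrite !HX; try lia.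
rewrite /code (lp_condP Hrc (j := g + k)); first by rewrite addnA.
- lia.
- lia.
- rewrite leq_min; apply/andP; split; lia.
Qed.

End Main.

Theorem lemma9 (T : eqType) (w : seq T) (i j : nat) :
  1 <= i <= size w ->
  1 <= i - mu w i ->
  i + mu w i - 1 <= size w ->
  1 < mu w i ->
  i < j < i + mu w i ->
  forall h : nat, i < h <= j -> 1 < mu w h ->
  exists h' : nat, [/\ i < h' <= j, h' < i + mu w h' & mu w h <= mu w h'].
Proof.
move=> Hi Hip Hin Hp1 Hij.
suff H : forall N h, h <= N -> i < h <= j -> 1 < mu w h ->
    exists h', [/\ i < h' <= h, h' < i + mu w h' & mu w h <= mu w h'].
  move=> h Hh Hmu; have [h' [H1 H2 H3]] := H h h (leqnn h) Hh Hmu.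
  by exists h'; split => //; lia.
elim=> [|N IH] h HN Hh Hmu; first lia.
case: (ltnP h (i + mu w h)) => Hc.
  by exists h; split => //; lia.
have [c [Hc1 Hc2]] := keyK (w := w) (h := h) ltac:(lia) ltac:(lia) Hmu.
have [h' [H1 H2 H3]] := IH c ltac:(lia) ltac:(lia) ltac:(lia).
by exists h'; split => //; [lia | apply: leq_trans H3].
Qed.
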